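(* Let $G$ and $H$ be decision structures. Then $G$ and $H$ are structurally equivalent if and only if they are isomorphic as arc-labelled graphs, i.e. there is a bijection $\Gamma:N(G)\to N(H)$ such that for all $u,v\in N(G)$ we have $(u,v)\in A(G)$ iff $(\Gamma(u),\Gamma(v))\in A(H)$, and in that case $\ell_G(u,v)=\ell_H(\Gamma(u),\Gamma(v))$.
   Context: Fix a nonempty set $\mathbb{W}$ of states, a set $\mathbb{S}$ of signals with at least two elements, and a set $\mathcal{R}$ of return values. An action is a pair $\alpha=(\alpha_B,\alpha_R)$ of functions $\alpha_B:\mathbb{W}\to\mathbb{S}$ and $\alpha_R:\mathbb{W}\to\mathcal{R}$; $\mathcal{A}$ denotes the set of all actions. A decision structure is a finite directed acyclic graph $Z=(N,A)$, $A\subseteq N\times N$, with a unique source (node with no incoming arc), together with an arc labelling $\ell:A\to\mathcal{R}$ and a node labelling $\eta:N\to\mathcal{A}$, such that distinct arcs leaving the same node have distinct labels; the arc out of $v$ labelled $r$, if it exists, is called the $r$-arc out of $v$. For a state $w$, the action $Z(w)$ selected by $Z$ is obtained as follows: start at the source; at the current node $v$ with $\eta(v)=\alpha$, if the $\alpha_R(w)$-arc out of $v$ exists move to its head and repeat, otherwise output $\alpha$. Two decision structures $G,H$ are structurally equivalent if they have the same number $n$ of nodes and there are enumerations $g_1,\dots,g_n$ of $N(G)$ and $h_1,\dots,h_n$ of $N(H)$ such that for every choice of actions $\alpha_1,\dots,\alpha_n$, relabelling $g_i$ and $h_i$ by $\alpha_i$ for all $i$ yields $G(w)=H(w)$ for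 every state $w$ (the original node labels play no role). It is assumed that $\mathcal{R}$ contains at least one value that does not label any arc of $G$ or $H$. *)

(* Defs.v *)
From mathcomp Require Import all_boot.
Set Implicit Arguments. Unset Strict Implicit. Unset Printing Implicit Defensive.

Definition action (W S Rv : Type) : Type := ((W -> S) * (W -> Rv))%type.

(* A decision structure: a finite DAG (node set a finType, arc set a boolean
   relation) with a unique source, an arc labelling (only meaningful on arcs),
   and a node labelling, such that distinct arcs out of a node have distinct
   labels. *)
Record dstruct (W S Rv : Type) := DStruct {
  node : finType;
  darc : rel node;
  dlab : node -> node -> Rv;
  deta : node -> action W S Rv;
  dsrc : node;
  ds_acyclic : forall u v : node, darc u v -> ~~ connect darc v u;
  ds_source : forall v : node, (forall u, ~~ darc u v) <-> v = dsrc;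
  ds_labels : forall v u1 u2 : node,
      darc v u1 -> darc v u2 -> dlab v u1 = dlab v u2 -> u1 = u2
}.

Section Run.
Variables (W S Rv : Type) (Z : dstruct W S Rv).

(* [runs et w v t]: with node labelling [et], state [w], the traversal
   started at node [v] ends (outputs the label of) node [t]. *)
Inductive runs (et : node Z -> action W S Rv) (w : W) : node Z -> node Z -> Prop :=
| runs_stop v :
    (forall u, darc v u -> dlab v u <> (et v).2 w) -> runs et w v v
| runs_step v u t :
    darc v u -> dlab v u = (et v).2 w -> runs et w u t -> runs et w v t.

Definition selects (et : node Z -> action W S Rv) (w : W) (a : action W S Rv) : Prop :=
  exists t, runs et w (dsrc Z) t /\ et t = a.

End Run.

Definition struct_equiv (W S Rv : Type) (G H : dstruct W S Rv) : Prop :=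
  exists (n : nat) (g : 'I_n -> node G) (h : 'I_n -> node H),
    bijective g /\ bijective h /\
    forall (alpha : 'I_n -> action W S Rv)
           (etG : node G -> action W S Rv) (etH : node H -> action W S Rv),
      (forall i, etG (g i) = alpha i) -> (forall i, etH (h i) = alpha i) ->
      forall (w : W) (a : action W S Rv), selects etG w a <-> selects etH w a.

Definition arc_iso (W S Rv : Type) (G H : dstruct W S Rv) : Prop :=
  exists Gam : node G -> node H,
    bijective Gam /\
    forall u v : node G,
      (darc u v = darc (Gam u) (Gam v)) /\
      (darc u v -> dlab u v = dlab (Gam u) (Gam v)).

(* Main.v *)
Require Import Defs.
From mathcomp Require Import all_boot.
Set Implicit Arguments. Unset Strict Implicit. Unset Printing Implicit Defensive.

Inductive reach W S Rv (Z : dstruct W S Rv) (et : node Z -> action W S Rv) (w : W)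
  : node Z -> node Z -> Prop :=
| reach_refl v : reach et w v v
| reach_step v u t : darc v u -> dlab v u = (et v).2 w -> reach et w u t -> reach et w v t.

Lemma reach_connect W S Rv (Z : dstruct W S Rv) et w (x t : node Z) :
  reach et w x t -> connect (@darc _ _ _ _) x t.
Proof.
elim=> [v|v u t' Hvu _ _ IH]; first exact: connect0.
exact: connect_trans (connect1 Hvu) IH.
Qed.

Lemma runs_reach W S Rv (Z : dstruct W S Rv) et w (x t : node Z) :
  runs et w x t -> reach et w x t.
Proof. elim=> [v _|v u t' H1 H2 _ IH]; [exact: reach_refl | exact: reach_step H1 H2 IH]. Qed.

Lemma reach_trans W S Rv (Z : dstruct W S Rv) et w (x t t' : node Z) :
  reach et w x t -> reach et w t t' -> reach et w x t'.
Proof. elim=> // v u t0 H1 H2 _ IH /IH; exact: reach_step. Qed.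

Lemma reach_runs W S Rv (Z : dstruct W S Rv) et w (x t : node Z) :
  reach et w x t -> (forall u, darc t u -> dlab t u <> (et t).2 w) -> runs et w x t.
Proof.
elim=> [v Hs|v u t0 H1 H2 _ IH Hs]; first exact: runs_stop.
exact: runs_step H1 H2 (IH Hs).
Qed.

Lemma reach_upd W S Rv (Z : dstruct W S Rv) et et' w (x t : node Z) :
  reach et w x t -> (forall y, y != t -> (et' y).2 w = (et y).2 w) -> reach et' w x t.
Proof.
elim=> [v _|v u t0 H1 H2 Hr IH Ha]; first exact: reach_refl.
apply: (reach_step H1) (IH Ha).
rewrite Ha //; apply/eqP=> E; subst v.
by have := ds_acyclic H1; rewrite (reach_connect Hr).
Qed.

Lemma reach_runs_det W S Rv (Z : dstruct W S Rv) et w (x t t' : node Z) :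
  reach et w x t -> runs et w x t' -> runs et w t t'.
Proof.
elim=> // v u t0 H1 H2 _ IH Hrun.
inversion Hrun; subst.
- by case: (H u H1).
- have E : u = u0 by apply: (ds_labels H1 H); rewrite H2 H0.
  subst u0; exact: IH.
Qed.

Lemma runs_inv W S Rv (Z : dstruct W S Rv) et w (x t : node Z) :
  runs et w x t -> x = t \/ exists z, [/\ darc x z, dlab x z = (et x).2 w & runs et w z t].
Proof. case=> [v _|v u t' H1 H2 H3]; [by left | right; by exists u]. Qed.

Lemma one_dir (W S Rv : Type) (G H : dstruct W S Rv) (w0 : W) (s1 s2 : S) (hs : s1 <> s2)
  (r0 : Rv)
  (hG : forall u v : node G, darc u v -> dlab u v <> r0)
  (hH : forall u v : node H, darc u v -> dlab u v <> r0)
  (n : nat) (g : 'I_n -> node G) (gi : node G -> 'I_n) (h : 'I_n -> node H)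
  (hi : node H -> 'I_n)
  (gK : cancel g gi) (giK : cancel gi g) (hK : cancel h hi) (hiK : cancel hi h)
  (P : forall (alpha : 'I_n -> action W S Rv)
           (etG : node G -> action W S Rv) (etH : node H -> action W S Rv),
      (forall i, etG (g i) = alpha i) -> (forall i, etH (h i) = alpha i) ->
      forall (w : W) (a : action W S Rv), selects etG w a <-> selects etH w a) :
  forall u v : node G, darc u v ->
    darc (h (gi u)) (h (gi v)) /\ dlab u v = dlab (h (gi u)) (h (gi v)).
Proof.
pose Gam := fun x => h (gi x).
pose Gi := fun y => g (hi y).
have GamK : cancel Gam Gi by move=> x; rewrite /Gam /Gi hK giK.
have GiK : cancel Gi Gam by move=> y; rewrite /Gam /Gi gK hiK.
pose act (rho : node G -> Rv) (t : node G) (x : node G) : action W S Rv :=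
  (fun _ : W => if x == t then s1 else s2, fun _ : W => rho x).
have KC : forall rho t, runs (act rho t) w0 (dsrc G) t ->
    runs (fun z => act rho t (Gi z)) w0 (dsrc H) (Gam t).
  move=> rho t Hr.
  have HH : forall i, (fun z => act rho t (Gi z)) (h i) = act rho t (g i).
    by move=> i /=; rewrite /Gi hK.
  have [+ _] := P _ (act rho t) (fun z => act rho t (Gi z)) (fun i => erefl) HH w0 (act rho t t).
  case; first by exists t.
  move=> t' [Hr' /(congr1 (fun a => a.1 w0))] /=; rewrite eqxx.
  case: eqP => [E _|_ /esym/hs []]; by rewrite -{2}E GiK.
pose Inv u := exists rho : node G -> Rv, rho u = r0 /\
   runs (act rho u) w0 (dsrc G) u /\
   (forall y, ~~ connect (@darc _ _ _ _) y u -> rho y = r0) /\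
   (forall y, ~~ connect (@darc _ _ _ _) (Gam y) (Gam u) -> rho y = r0).
have step : forall u v, darc u v -> Inv u ->
   darc (Gam u) (Gam v) /\ dlab u v = dlab (Gam u) (Gam v) /\ Inv v.
  move=> u v Huv [rho [Hu [Hr [HcG HcH]]]].
  have uv : v != u.
    apply/eqP=> E; subst v; by have := ds_acyclic Huv; rewrite connect0.
  pose rho' := fun x => if x == u then dlab u v else rho x.
  have Hv : rho v = r0 by apply: HcG; exact: ds_acyclic Huv.
  have HrG : runs (act rho' v) w0 (dsrc G) v.
    apply: reach_runs.
      apply: reach_trans.
        apply: (reach_upd (runs_reach Hr)) => y Hy /=.
        by rewrite /rho' (negbTE Hy).
      apply: reach_step Huv _ (reach_refl _ _ _).
      by rewrite /= /rho' eqxx.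
    by move=> z Hz; rewrite /= /rho' (negbTE uv) Hv; apply: hG.
  have HrH := KC _ _ Hr.
  have HrH' := KC _ _ HrG.
  have HrH2 : reach (fun z => act rho' v (Gi z)) w0 (dsrc H) (Gam u).
    apply: (reach_upd (runs_reach HrH)) => y Hy /=.
    rewrite /rho'; case: eqP => // E.
    by move: Hy; rewrite -E GiK eqxx.
  have Hrun := reach_runs_det HrH2 HrH'.
  have GamI : injective Gam := can_inj GamK.
  case: (runs_inv Hrun) => [/GamI E1|[z [Hz Hl Hrz]]].
    by rewrite E1 eqxx in uv.
  move: Hl; rewrite /= GamK /rho' eqxx => Hl.
  case: (runs_inv Hrz) => [E3|[z' [Hz' Hl' _]]].
  - subst z.
    split; first done. split; first by [].
    exists rho'; split; first by rewrite /rho' (negbTE uv).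
    split; first done.
    split.
    * move=> y Hy; rewrite /rho'.
      case: eqP => [E|_].
        by subst y; rewrite (connect1 Huv) in Hy.
      apply: HcG; apply: contra Hy => Hy.
      exact: connect_trans Hy (connect1 Huv).
    * move=> y Hy; rewrite /rho'.
      case: eqP => [E|_].
        by subst y; rewrite (connect1 Hz) in Hy.
      apply: HcH; apply: contra Hy => Hy.
      exact: connect_trans Hy (connect1 Hz).
  - exfalso.
    have Hne : Gi z != u.
      apply/eqP=> E; have E' : z = Gam u by rewrite -E GiK.
      subst z; by have := ds_acyclic Hz; rewrite connect0.
    move: Hl'; rewrite /= /rho' (negbTE Hne) HcH.
      by apply: hH.
    rewrite GiK; exact: ds_acyclic Hz.
have allInv : forall k u, #|[set x | connect (@darc _ _ _ _) x u]| <= k -> Inv u.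
  elim=> [|k IH] u Hk.
    move: Hk; rewrite leqn0 => /eqP/card0_eq/(_ u).
    by rewrite inE connect0.
  case: (boolP (u == dsrc G)) => [/eqP->|Hu].
    exists (fun _ => r0); split; first done.
    split; last by split.
    by apply: runs_stop => z Hz; apply: hG.
  have [a Hau] : exists a, darc a u.
    case: (boolP [exists a, darc a u]) => [/existsP //|/existsPn Hn].
    by have := (ds_source u).1 Hn; move/eqP: Hu.
  have Hp : [set x | connect (@darc _ _ _ _) x a] \proper [set x | connect (@darc _ _ _ _) x u].
    apply/properP; split.
      apply/subsetP => x; rewrite !inE => Hx.
      exact: connect_trans Hx (connect1 Hau).
    exists u; rewrite !inE ?connect0 //.
    exact: ds_acyclic Hau.
  have Hlt := proper_card Hp.
  have Hka : #|[set x | connect (@darc _ _ _ _) x a]| <= k.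
    by rewrite -ltnS; apply: leq_trans Hlt Hk.
  by case: (step a u Hau (IH a Hka)) => _ [_].
move=> u v Huv.
by have [? [? _]] := step u v Huv (allInv _ u (leqnn _)).
Qed.

Lemma transfer W S Rv (G H : dstruct W S Rv) (Gam : node G -> node H)
  (arcE : forall u v : node G, darc u v = darc (Gam u) (Gam v))
  (labE : forall u v : node G, darc u v -> dlab u v = dlab (Gam u) (Gam v))
  (Gi : node H -> node G) (GamK : cancel Gam Gi) (GiK : cancel Gi Gam)
  et et' (etE : forall x, et' (Gam x) = et x) w (x t : node G) :
  runs et w x t -> runs et' w (Gam x) (Gam t).
Proof.
elim=> [v Hs|v u t' H1 H2 _ IH].
  apply: runs_stop => z Hz; rewrite -(GiK z) -arcE in Hz.
  by rewrite -(GiK z) -labE // etE; apply: Hs.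
apply: runs_step IH; first by rewrite -arcE.
by rewrite -labE // etE.
Qed.

Lemma src_map W S Rv (G H : dstruct W S Rv) (Gam : node G -> node H)
  (arcE : forall u v : node G, darc u v = darc (Gam u) (Gam v))
  (Gi : node H -> node G) (GiK : cancel Gi Gam) :
  Gam (dsrc G) = dsrc H.
Proof.
apply/(ds_source _).1 => z; rewrite -(GiK z) -arcE.
by apply/negP => Hz; have := (ds_source (dsrc G)).2 erefl (Gi z); rewrite Hz.
Qed.

Lemma iso_sym W S Rv (G H : dstruct W S Rv) (Gam : node G -> node H)
  (arcE : forall u v : node G, darc u v = darc (Gam u) (Gam v))
  (labE : forall u v : node G, darc u v -> dlab u v = dlab (Gam u) (Gam v))
  (Gi : node H -> node G) (GamK : cancel Gam Gi) (GiK : cancel Gi Gam) :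
  (forall u v : node H, darc u v = darc (Gi u) (Gi v)) /\
  (forall u v : node H, darc u v -> dlab u v = dlab (Gi u) (Gi v)).
Proof.
split=> u v; first by rewrite -{1}(GiK u) -{1}(GiK v) -arcE.
rewrite -{1}(GiK u) -{1}(GiK v) -arcE => Huv.
by rewrite labE // !GiK.
Qed.

Theorem mainTheorem2 (W S Rv : Type) (G H : dstruct W S Rv)
  (hW : inhabited W)
  (hS : exists s1 s2 : S, s1 <> s2)
  (hR : exists r : Rv,
      (forall u v : node G, darc u v -> dlab u v <> r) /\
      (forall u v : node H, darc u v -> dlab u v <> r)) :
  struct_equiv G H <-> arc_iso G H.
Proof.
split.
- case: hW => w0; case: hS => s1 [s2 hs]; case: hR => r0 [hG hH].
  case=> n [g [h [[gi gK giK] [[hi hK hiK] P]]]].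
  have P' : forall (alpha : 'I_n -> action W S Rv)
           (etH : node H -> action W S Rv) (etG : node G -> action W S Rv),
      (forall i, etH (h i) = alpha i) -> (forall i, etG (g i) = alpha i) ->
      forall (w : W) (a : action W S Rv), selects etH w a <-> selects etG w a.
    by move=> alpha etH etG H1 H2 w a; apply: iff_sym; apply: P.
  have D1 := one_dir w0 hs hG hH gK giK hK hiK P.
  have D2 := one_dir w0 hs hH hG hK hiK gK giK P'.
  exists (fun x => h (gi x)); split.
    by exists (fun y => g (hi y)) => x; rewrite ?hK ?giK ?gK ?hiK.
  move=> u v; split; last by case/D1.
  apply/idP/idP; first by case/D1.
  by case/D2; rewrite !hK !giK.
- case=> Gam [[Gi GamK GiK] HE].
  have arcE u v := (HE u v).1.
  have labE u v := (HE u v).2.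
  have [arcE' labE'] := iso_sym arcE labE GamK GiK.
  exists #|node G|, enum_val, (fun i => Gam (enum_val i)).
  split; first by exists enum_rank; [exact: enum_valK | exact: enum_rankK].
  split.
    exists (fun y => enum_rank (Gi y)) => x; first by rewrite GamK enum_valK.
    by rewrite enum_rankK GiK.
  move=> alpha etG etH HG HH w a.
  have etE : forall x, etH (Gam x) = etG x.
    by move=> x; rewrite -(enum_rankK x) HG HH.
  have etE' : forall y, etG (Gi y) = etH y.
    by move=> y; rewrite -etE GiK.
  split; case=> t [Ht Ha].
    exists (Gam t); rewrite etE; split=> //.
    rewrite -(src_map arcE GiK); exact: (transfer arcE labE GamK GiK etE Ht).
  exists (Gi t); rewrite etE'; split=> //.
  rewrite -(src_map arcE' GamK); exact: (transfer arcE' labE' GiK GamK etE' Ht).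
Qed.
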